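(* Fix spins $j_1,\dots,j_4\in\frac12\mathbb{Z}_{\ge0}$ with $J=j_1+j_2+j_3+j_4\in\mathbb{Z}$. Then in $\mathcal{H}_{j_1j_2j_3j_4}$ the states $|S,T\rangle$ are not linearly independent, and all the linear relations among them are generated by the fundamental relation $$(k_{12}+1)(k_{34}+1)\,|S-1,T\rangle-(k_{13}+1)(k_{24}+1)\,|S,T-1\rangle+k_{14}k_{23}\,|S,T\rangle=0,$$ where $k_{ij}=k_{ij}(j_i,S,T)$.
   Context: Spinors: $[z|w\rangle=z_0w_1-z_1w_0$ for $z,w\in\mathbb{C}^2$. $\mathcal{H}_{j_1j_2j_3j_4}$ is the space of holomorphic functions $f(z_1,\dots,z_4)$ on $(\mathbb{C}^2)^4$ that are homogeneous of degree $2j_i$ in $z_i$ and invariant under $z_i\mapsto gz_i$ for all $g\in SU(2)$ (the space of 4-valent $SU(2)$ intertwiners). For integers or half-integers $S,T$ with $S-j_1-j_2\in\mathbb{Z}$ and $T-j_1-j_3\in\mathbb{Z}$, put $U=J-S-T$ and $$k_{12}=j_1+j_2-S,\ k_{34}=j_3+j_4-S,\ k_{13}=j_1+j_3-T,\ k_{24}=j_2+j_4-T,\ k_{14}=j_1+j_4-U,\ k_{23}=j_2+j_3-U.$$ $(S,T)$ is admissible if all $k_{ij}\ge0$. For admissible $(S,T)$, $|S,T\rangle$ is the function $$(z_i|S,T\rangle=\prod_{i<j}\frac{[z_i|z_j\rangle^{k_{ij}}}{k_{ij}!},$$ and $|S,T\rangle:=0$ if $(S,T)$ is not admissible. *)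

(* Defs.v *)
(* Spins and the labels S, T are rationals (half-integers). *)
From HB Require Import structures.
From mathcomp Require Import all_boot all_order all_algebra.
Set Implicit Arguments.
Unset Strict Implicit.
Unset Printing Implicit Defensive.
Import Order.TTheory GRing.Theory Num.Theory.
Local Open Scope ring_scope.

Definition Jtot (j1 j2 j3 j4 : rat) : rat := j1 + j2 + j3 + j4.
Definition Uof (j1 j2 j3 j4 S T : rat) : rat := Jtot j1 j2 j3 j4 - S - T.

Definition k12 (j1 j2 j3 j4 S T : rat) : rat := j1 + j2 - S.
Definition k34 (j1 j2 j3 j4 S T : rat) : rat := j3 + j4 - S.
Definition k13 (j1 j2 j3 j4 S T : rat) : rat := j1 + j3 - T.
Definition k24 (j1 j2 j3 j4 S T : rat) : rat := j2 + j4 - T.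
Definition k14 (j1 j2 j3 j4 S T : rat) : rat := j1 + j4 - Uof j1 j2 j3 j4 S T.
Definition k23 (j1 j2 j3 j4 S T : rat) : rat := j2 + j3 - Uof j1 j2 j3 j4 S T.

Definition validST (j1 j2 j3 j4 S T : rat) : bool :=
  ((S - j1 - j2) \is a Num.int) && ((T - j1 - j3) \is a Num.int).

Definition admissible (j1 j2 j3 j4 S T : rat) : bool :=
  validST j1 j2 j3 j4 S T &&
  [&& 0 <= k12 j1 j2 j3 j4 S T, 0 <= k34 j1 j2 j3 j4 S T,
      0 <= k13 j1 j2 j3 j4 S T, 0 <= k24 j1 j2 j3 j4 S T,
      0 <= k14 j1 j2 j3 j4 S T & 0 <= k23 j1 j2 j3 j4 S T].

Definition bracket (C : fieldType) (z w : C * C) : C := z.1 * w.2 - z.2 * w.1.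

Definition bfactor (C : fieldType) (z w : C * C) (k : rat) : C :=
  bracket z w ^+ Num.truncn k / ((Num.truncn k)`!)%:R.

(* The state |S,T>, as a function of (z_1,...,z_4) = (z 0, ..., z 3);
   it is 0 when (S,T) is not admissible. *)
Definition state (C : fieldType) (j1 j2 j3 j4 S T : rat)
    (z : 'I_4 -> C * C) : C :=
  if admissible j1 j2 j3 j4 S T then
    bfactor (z (inord 0)) (z (inord 1)) (k12 j1 j2 j3 j4 S T) *
    bfactor (z (inord 0)) (z (inord 2)) (k13 j1 j2 j3 j4 S T) *
    bfactor (z (inord 0)) (z (inord 3)) (k14 j1 j2 j3 j4 S T) *
    bfactor (z (inord 1)) (z (inord 2)) (k23 j1 j2 j3 j4 S T) *
    bfactor (z (inord 1)) (z (inord 3)) (k24 j1 j2 j3 j4 S T) *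
    bfactor (z (inord 2)) (z (inord 3)) (k34 j1 j2 j3 j4 S T)
  else 0.

Definition fa (j1 j2 j3 j4 S T : rat) : rat :=
  (k12 j1 j2 j3 j4 S T + 1) * (k34 j1 j2 j3 j4 S T + 1).
Definition fb (j1 j2 j3 j4 S T : rat) : rat :=
  (k13 j1 j2 j3 j4 S T + 1) * (k24 j1 j2 j3 j4 S T + 1).
Definition fc (j1 j2 j3 j4 S T : rat) : rat :=
  k14 j1 j2 j3 j4 S T * k23 j1 j2 j3 j4 S T.

Definition fundcoef (C : fieldType) (j1 j2 j3 j4 : rat) (q p : rat * rat) : C :=
  let S := q.1 in let T := q.2 in
  (ratr (fa j1 j2 j3 j4 S T) : C) *+ (p == (S - 1, T))
  - (ratr (fb j1 j2 j3 j4 S T) : C) *+ (p == (S, T - 1))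
  + (ratr (fc j1 j2 j3 j4 S T) : C) *+ (p == (S, T)).

(* Main.v *)
Require Import Defs.
From HB Require Import structures.
From mathcomp Require Import all_boot all_order all_algebra.
From mathcomp Require Import ring lra.
Import Order.TTheory GRing.Theory Num.Theory.
Set Implicit Arguments.
Unset Strict Implicit.
Unset Printing Implicit Defensive.
Local Open Scope ring_scope.

Lemma int_gap (x : rat) : x \is a Num.int -> 0 < x -> 1 <= x.
Proof. by move=> /intrP[m ->]; rewrite ltr0z ler1z. Qed.

Lemma int_nat (x : rat) : x \is a Num.int -> 0 <= x -> x = (Num.truncn x)%:R.
Proof. by move=> hi h0; rewrite truncnK // natrEint hi. Qed.

Lemma k12_S j1 j2 j3 j4 S T : k12 j1 j2 j3 j4 (S-1) T = k12 j1 j2 j3 j4 S T + 1.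
Proof. rewrite /k12 /Uof /Jtot; ring. Qed.
Lemma k34_S j1 j2 j3 j4 S T : k34 j1 j2 j3 j4 (S-1) T = k34 j1 j2 j3 j4 S T + 1.
Proof. rewrite /k34 /Uof /Jtot; ring. Qed.
Lemma k13_S j1 j2 j3 j4 S T : k13 j1 j2 j3 j4 (S-1) T = k13 j1 j2 j3 j4 S T .
Proof. rewrite /k13 /Uof /Jtot; ring. Qed.
Lemma k24_S j1 j2 j3 j4 S T : k24 j1 j2 j3 j4 (S-1) T = k24 j1 j2 j3 j4 S T .
Proof. rewrite /k24 /Uof /Jtot; ring. Qed.
Lemma k14_S j1 j2 j3 j4 S T : k14 j1 j2 j3 j4 (S-1) T = k14 j1 j2 j3 j4 S T - 1.
Proof. rewrite /k14 /Uof /Jtot; ring. Qed.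
Lemma k23_S j1 j2 j3 j4 S T : k23 j1 j2 j3 j4 (S-1) T = k23 j1 j2 j3 j4 S T - 1.
Proof. rewrite /k23 /Uof /Jtot; ring. Qed.
Lemma k12_T j1 j2 j3 j4 S T : k12 j1 j2 j3 j4 S (T-1) = k12 j1 j2 j3 j4 S T .
Proof. rewrite /k12 /Uof /Jtot; ring. Qed.
Lemma k34_T j1 j2 j3 j4 S T : k34 j1 j2 j3 j4 S (T-1) = k34 j1 j2 j3 j4 S T .
Proof. rewrite /k34 /Uof /Jtot; ring. Qed.
Lemma k13_T j1 j2 j3 j4 S T : k13 j1 j2 j3 j4 S (T-1) = k13 j1 j2 j3 j4 S T + 1.
Proof. rewrite /k13 /Uof /Jtot; ring. Qed.
Lemma k24_T j1 j2 j3 j4 S T : k24 j1 j2 j3 j4 S (T-1) = k24 j1 j2 j3 j4 S T + 1.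
Proof. rewrite /k24 /Uof /Jtot; ring. Qed.
Lemma k14_T j1 j2 j3 j4 S T : k14 j1 j2 j3 j4 S (T-1) = k14 j1 j2 j3 j4 S T - 1.
Proof. rewrite /k14 /Uof /Jtot; ring. Qed.
Lemma k23_T j1 j2 j3 j4 S T : k23 j1 j2 j3 j4 S (T-1) = k23 j1 j2 j3 j4 S T - 1.
Proof. rewrite /k23 /Uof /Jtot; ring. Qed.

Lemma k_int j1 j2 j3 j4 S T :
  (j1 *+ 2) \is a Num.nat -> (j2 *+ 2) \is a Num.nat ->
  (j3 *+ 2) \is a Num.nat -> (j4 *+ 2) \is a Num.nat ->
  Jtot j1 j2 j3 j4 \is a Num.int -> validST j1 j2 j3 j4 S T ->
  [/\ k12 j1 j2 j3 j4 S T \is a Num.int, k34 j1 j2 j3 j4 S T \is a Num.int,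
      k13 j1 j2 j3 j4 S T \is a Num.int, k24 j1 j2 j3 j4 S T \is a Num.int &
      (k14 j1 j2 j3 j4 S T \is a Num.int) && (k23 j1 j2 j3 j4 S T \is a Num.int)].
Proof.
move=> /intr_nat h1 /intr_nat h2 /intr_nat h3 /intr_nat h4 hJ /andP[hs ht].
have e12 : k12 j1 j2 j3 j4 S T = - (S - j1 - j2) by rewrite /k12; ring.
have e13 : k13 j1 j2 j3 j4 S T = - (T - j1 - j3) by rewrite /k13; ring.
have e34 : k34 j1 j2 j3 j4 S T = Jtot j1 j2 j3 j4 - (S - j1 - j2) - j1 *+ 2 - j2 *+ 2
  by rewrite /k34 /Jtot !mulr2n; ring.
have e24 : k24 j1 j2 j3 j4 S T = Jtot j1 j2 j3 j4 - (T - j1 - j3) - j1 *+ 2 - j3 *+ 2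
  by rewrite /k24 /Jtot !mulr2n; ring.
have e14 : k14 j1 j2 j3 j4 S T = (S - j1 - j2) + (T - j1 - j3) + j1 *+ 2
  by rewrite /k14 /Uof /Jtot !mulr2n; ring.
have e23 : k23 j1 j2 j3 j4 S T = (S - j1 - j2) + (T - j1 - j3) + j1 *+ 2 + j2 *+ 2 + j3 *+ 2 - Jtot j1 j2 j3 j4
  by rewrite /k23 /Uof /Jtot !mulr2n; ring.
rewrite e12 e13 e34 e24 e14 e23.
move: (S - j1 - j2) (T - j1 - j3) (Jtot j1 j2 j3 j4) (j1 *+ 2) (j2 *+ 2) (j3 *+ 2) hs ht hJ h1 h2 h3
  => s t J a b c hs ht hJ ha hb hc.
split; rewrite ?rpredN ?rpredB ?rpredD //.
Qed.

Definition bfn (C : fieldType) (x : C) (n : nat) : C := x ^+ n / (n`!)%:R.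

Lemma bfactor_nat (C : fieldType) (z w : C * C) (n : nat) :
  bfactor z w n%:R = bfn (bracket z w) n.
Proof. by rewrite /bfactor natrK. Qed.

Lemma natC_neq0 (C : numClosedFieldType) n : (n.+1%:R : C) != 0.
Proof. by rewrite pnatr_eq0. Qed.

Lemma factC_neq0 (C : numClosedFieldType) n : (n`!%:R : C) != 0.
Proof. by rewrite pnatr_eq0 -lt0n fact_gt0. Qed.

Lemma natC1_neq0 (C : numClosedFieldType) n : (1 + n%:R : C) != 0.
Proof. by rewrite addrC natr1 pnatr_eq0. Qed.

Lemma bfnS (C : numClosedFieldType) (x : C) n : bfn x n.+1 = x * bfn x n / n.+1%:R.
Proof.
rewrite /bfn exprS factS natrM.
have h1 := natC_neq0 C n; have h2 := factC_neq0 C n.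
field. by rewrite natC1_neq0 factC_neq0.
Qed.

Lemma core0 (C : numClosedFieldType) (x01 x02 x03 x12 x13 x23 : C) (a b c d e f : nat) :
  x01 * x23 - x02 * x13 + x03 * x12 = 0 ->
  a.+1%:R * b.+1%:R * (bfn x01 a.+1 * bfn x02 c * bfn x03 e * bfn x12 f * bfn x13 d * bfn x23 b.+1)
 - c.+1%:R * d.+1%:R * (bfn x01 a * bfn x02 c.+1 * bfn x03 e * bfn x12 f * bfn x13 d.+1 * bfn x23 b)
 + e.+1%:R * f.+1%:R * (bfn x01 a * bfn x02 c * bfn x03 e.+1 * bfn x12 f.+1 * bfn x13 d * bfn x23 b) = 0.
Proof.
move=> hp; rewrite !bfnS.
apply: (@eq_trans _ _ (bfn x01 a * bfn x02 c * bfn x03 e * bfn x12 f * bfn x13 d * bfn x23 b *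
   (x01 * x23 - x02 * x13 + x03 * x12))); last by rewrite hp mulr0.
have ha := natC_neq0 C a; have hb := natC_neq0 C b; have hc := natC_neq0 C c.
have hd := natC_neq0 C d; have he := natC_neq0 C e; have hf := natC_neq0 C f.
field. by rewrite !natC1_neq0.
Qed.

Lemma validS j1 j2 j3 j4 S T : validST j1 j2 j3 j4 S T -> validST j1 j2 j3 j4 (S - 1) T.
Proof.
rewrite /validST => /andP[hs ->]; rewrite andbT.
have -> : S - 1 - j1 - j2 = (S - j1 - j2) - 1 by ring.
by rewrite rpredB.
Qed.

Lemma validT j1 j2 j3 j4 S T : validST j1 j2 j3 j4 S T -> validST j1 j2 j3 j4 S (T - 1).
Proof.
rewrite /validST => /andP[-> ht] /=.
have -> : T - 1 - j1 - j3 = (T - j1 - j3) - 1 by ring.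
by rewrite rpredB.
Qed.

Lemma state0 (C : fieldType) j1 j2 j3 j4 S T z :
  ~~ admissible j1 j2 j3 j4 S T -> state (C := C) j1 j2 j3 j4 S T z = 0.
Proof. by rewrite /state => /negbTE ->. Qed.

Lemma admD j1 j2 j3 j4 S T : admissible j1 j2 j3 j4 S T ->
  validST j1 j2 j3 j4 S T /\ 0 <= k12 j1 j2 j3 j4 S T /\ 0 <= k34 j1 j2 j3 j4 S T /\
      0 <= k13 j1 j2 j3 j4 S T /\ 0 <= k24 j1 j2 j3 j4 S T /\ 0 <= k14 j1 j2 j3 j4 S T /\
      0 <= k23 j1 j2 j3 j4 S T.
Proof. by case/andP=> -> /and5P[-> -> -> -> /andP[-> ->]]. Qed.

Lemma admI j1 j2 j3 j4 S T :
  validST j1 j2 j3 j4 S T -> 0 <= k12 j1 j2 j3 j4 S T -> 0 <= k34 j1 j2 j3 j4 S T ->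
      0 <= k13 j1 j2 j3 j4 S T -> 0 <= k24 j1 j2 j3 j4 S T -> 0 <= k14 j1 j2 j3 j4 S T ->
      0 <= k23 j1 j2 j3 j4 S T -> admissible j1 j2 j3 j4 S T.
Proof. by rewrite /admissible => -> -> -> -> -> -> ->. Qed.

Lemma fund_rel (C : numClosedFieldType) (j1 j2 j3 j4 : rat)
  (hj1 : (j1 *+ 2) \is a Num.nat) (hj2 : (j2 *+ 2) \is a Num.nat)
  (hj3 : (j3 *+ 2) \is a Num.nat) (hj4 : (j4 *+ 2) \is a Num.nat)
  (hJ : Jtot j1 j2 j3 j4 \is a Num.int) S T (hv : validST j1 j2 j3 j4 S T) (z : 'I_4 -> C * C) :
       (ratr (fa j1 j2 j3 j4 S T) : C) * state j1 j2 j3 j4 (S - 1) T z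
       - (ratr (fb j1 j2 j3 j4 S T) : C) * state j1 j2 j3 j4 S (T - 1) z
       + (ratr (fc j1 j2 j3 j4 S T) : C) * state j1 j2 j3 j4 S T z = 0.
Proof.
have [i12 i34 i13 i24 /andP[i14 i23]] := k_int hj1 hj2 hj3 hj4 hJ hv.
case hm: [&& 0 <= k12 j1 j2 j3 j4 S T, 0 <= k34 j1 j2 j3 j4 S T, 0 <= k13 j1 j2 j3 j4 S T,
   0 <= k24 j1 j2 j3 j4 S T & (1 <= k14 j1 j2 j3 j4 S T) && (1 <= k23 j1 j2 j3 j4 S T)].
  move/and5P: hm => [h12 h34 h13 h24 /andP[h14 h23]].
  have A1 : admissible j1 j2 j3 j4 (S - 1) T.
    by apply: admI; rewrite ?(validS hv) ?k12_S ?k34_S ?k13_S ?k24_S ?k14_S ?k23_S //; lra.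
  have A2 : admissible j1 j2 j3 j4 S (T - 1).
    by apply: admI; rewrite ?(validT hv) ?k12_T ?k34_T ?k13_T ?k24_T ?k14_T ?k23_T //; lra.
  have A3 : admissible j1 j2 j3 j4 S T by apply: admI => //; lra.
  rewrite /state A1 A2 A3 k12_S k34_S k13_S k24_S k14_S k23_S k12_T k34_T k13_T k24_T k14_T k23_T.
  have [a ea] : exists a : nat, k12 j1 j2 j3 j4 S T = a%:R by exists (Num.truncn (k12 j1 j2 j3 j4 S T)); apply: int_nat.
  have [b eb] : exists a : nat, k34 j1 j2 j3 j4 S T = a%:R by exists (Num.truncn (k34 j1 j2 j3 j4 S T)); apply: int_nat.
  have [c ec] : exists a : nat, k13 j1 j2 j3 j4 S T = a%:R by exists (Num.truncn (k13 j1 j2 j3 j4 S T)); apply: int_nat.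
  have [d ed] : exists a : nat, k24 j1 j2 j3 j4 S T = a%:R by exists (Num.truncn (k24 j1 j2 j3 j4 S T)); apply: int_nat.
  have [e ee] : exists a : nat, k14 j1 j2 j3 j4 S T = a%:R + 1.
    have ie : k14 j1 j2 j3 j4 S T - 1 \is a Num.int by rewrite rpredB // rpred1.
    by exists (Num.truncn (k14 j1 j2 j3 j4 S T - 1)); rewrite -int_nat ?subrK // subr_ge0.
  have [f ef] : exists a : nat, k23 j1 j2 j3 j4 S T = a%:R + 1.
    have ie : k23 j1 j2 j3 j4 S T - 1 \is a Num.int by rewrite rpredB // rpred1.
    by exists (Num.truncn (k23 j1 j2 j3 j4 S T - 1)); rewrite -int_nat ?subrK // subr_ge0.
  rewrite /fa /fb /fc ea eb ec ed ee ef !addrK !natr1 -!natrM !ratr_nat !natrM !bfactor_nat.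
  apply: core0; rewrite /bracket; ring.
have i1 : 1 \is a @Num.int rat by rewrite rpred1.
have T1 : (ratr (fa j1 j2 j3 j4 S T) : C) * state j1 j2 j3 j4 (S - 1) T z = 0.
  case: (boolP (admissible j1 j2 j3 j4 (S - 1) T)) => [/admD|/state0->]; last by rewrite mulr0.
  rewrite k12_S k34_S k13_S k24_S k14_S k23_S => -[_ [g12 [g34 [g13 [g24 [g14 g23]]]]]].
  case: (eqVneq (k12 j1 j2 j3 j4 S T + 1) 0) => [E|N1]; first by rewrite /fa E mul0r rmorph0 mul0r.
  case: (eqVneq (k34 j1 j2 j3 j4 S T + 1) 0) => [E|N2]; first by rewrite /fa E mulr0 rmorph0 mul0r.
  have l1 : 1 <= k12 j1 j2 j3 j4 S T + 1 by apply: int_gap; [exact: rpredD i12 i1 | by rewrite lt_def N1 g12].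
  have l2 : 1 <= k34 j1 j2 j3 j4 S T + 1 by apply: int_gap; [exact: rpredD i34 i1 | by rewrite lt_def N2 g34].
  by move: hm; have -> : [&& 0 <= k12 j1 j2 j3 j4 S T, 0 <= k34 j1 j2 j3 j4 S T, 0 <= k13 j1 j2 j3 j4 S T,
   0 <= k24 j1 j2 j3 j4 S T & (1 <= k14 j1 j2 j3 j4 S T) && (1 <= k23 j1 j2 j3 j4 S T)]
   by apply/and5P; split; try apply/andP; try split; lra.
have T2 : (ratr (fb j1 j2 j3 j4 S T) : C) * state j1 j2 j3 j4 S (T - 1) z = 0.
  case: (boolP (admissible j1 j2 j3 j4 S (T - 1))) => [/admD|/state0->]; last by rewrite mulr0.
  rewrite k12_T k34_T k13_T k24_T k14_T k23_T => -[_ [g12 [g34 [g13 [g24 [g14 g23]]]]]].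
  case: (eqVneq (k13 j1 j2 j3 j4 S T + 1) 0) => [E|N1]; first by rewrite /fb E mul0r rmorph0 mul0r.
  case: (eqVneq (k24 j1 j2 j3 j4 S T + 1) 0) => [E|N2]; first by rewrite /fb E mulr0 rmorph0 mul0r.
  have l1 : 1 <= k13 j1 j2 j3 j4 S T + 1 by apply: int_gap; [exact: rpredD i13 i1 | by rewrite lt_def N1 g13].
  have l2 : 1 <= k24 j1 j2 j3 j4 S T + 1 by apply: int_gap; [exact: rpredD i24 i1 | by rewrite lt_def N2 g24].
  by move: hm; have -> : [&& 0 <= k12 j1 j2 j3 j4 S T, 0 <= k34 j1 j2 j3 j4 S T, 0 <= k13 j1 j2 j3 j4 S T,
   0 <= k24 j1 j2 j3 j4 S T & (1 <= k14 j1 j2 j3 j4 S T) && (1 <= k23 j1 j2 j3 j4 S T)]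
   by apply/and5P; split; try apply/andP; try split; lra.
have T3 : (ratr (fc j1 j2 j3 j4 S T) : C) * state j1 j2 j3 j4 S T z = 0.
  case: (boolP (admissible j1 j2 j3 j4 S T)) => [/admD|/state0->]; last by rewrite mulr0.
  move=> -[_ [g12 [g34 [g13 [g24 [g14 g23]]]]]].
  case: (eqVneq (k14 j1 j2 j3 j4 S T) 0) => [E|N1]; first by rewrite /fc E mul0r rmorph0 mul0r.
  case: (eqVneq (k23 j1 j2 j3 j4 S T) 0) => [E|N2]; first by rewrite /fc E mulr0 rmorph0 mul0r.
  have l1 : 1 <= k14 j1 j2 j3 j4 S T by apply: int_gap; [exact: i14 | by rewrite lt_def N1 g14].
  have l2 : 1 <= k23 j1 j2 j3 j4 S T by apply: int_gap; [exact: i23 | by rewrite lt_def N2 g23].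
  by move: hm; have -> : [&& 0 <= k12 j1 j2 j3 j4 S T, 0 <= k34 j1 j2 j3 j4 S T, 0 <= k13 j1 j2 j3 j4 S T,
   0 <= k24 j1 j2 j3 j4 S T & (1 <= k14 j1 j2 j3 j4 S T) && (1 <= k23 j1 j2 j3 j4 S T)]
   by apply/and5P; split; try apply/andP; try split; lra.
by rewrite T1 T2 T3 subrr add0r.
Qed.

Definition vecL (C : fieldType) (L : seq ((rat * rat) * C)) (p : rat * rat) : C :=
  \sum_(x <- L) x.2 *+ (x.1 == p).
Definition fnL (C : fieldType) j1 j2 j3 j4 (L : seq ((rat * rat) * C)) (z : 'I_4 -> C * C) : C :=
  \sum_(x <- L) x.2 * state j1 j2 j3 j4 x.1.1 x.1.2 z.
Definition relv (C : fieldType) j1 j2 j3 j4 (R : seq ((rat * rat) * C)) (p : rat * rat) : C :=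
  \sum_(y <- R) y.2 * fundcoef C j1 j2 j3 j4 y.1 p.
Definition nonnormal j1 j2 j3 j4 (p : rat * rat) : bool :=
  [&& admissible j1 j2 j3 j4 p.1 p.2, 1 <= k14 j1 j2 j3 j4 p.1 p.2 & 1 <= k23 j1 j2 j3 j4 p.1 p.2].
Definition step (C : fieldType) j1 j2 j3 j4 (x : (rat * rat) * C) : seq ((rat * rat) * C) :=
  let S := x.1.1 in let T := x.1.2 in
  if nonnormal j1 j2 j3 j4 x.1 then
    [:: ((S - 1, T), - (x.2 * ratr (fa j1 j2 j3 j4 S T) / ratr (fc j1 j2 j3 j4 S T)));
        ((S, T - 1), x.2 * ratr (fb j1 j2 j3 j4 S T) / ratr (fc j1 j2 j3 j4 S T))]
  else [:: x].
Definition rstep (C : fieldType) j1 j2 j3 j4 (x : (rat * rat) * C) : seq ((rat * rat) * C) :=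
  if nonnormal j1 j2 j3 j4 x.1 then [:: (x.1, x.2 / ratr (fc j1 j2 j3 j4 x.1.1 x.1.2))] else [::].
Definition stepL (C : fieldType) j1 j2 j3 j4 (L : seq ((rat * rat) * C)) :=
  flatten (map (step j1 j2 j3 j4) L).
Definition rstepL (C : fieldType) j1 j2 j3 j4 (L : seq ((rat * rat) * C)) :=
  flatten (map (rstep j1 j2 j3 j4) L).

Lemma fc_neq0 (C : numClosedFieldType) j1 j2 j3 j4 p : nonnormal j1 j2 j3 j4 p ->
  (ratr (fc j1 j2 j3 j4 p.1 p.2) : C) != 0.
Proof.
case/and3P=> _ h1 h2; rewrite fmorph_eq0 /fc mulf_neq0 //; apply/eqP => E;
  [move: h1 | move: h2]; rewrite E; lra.
Qed.

Lemma step_vec (C : numClosedFieldType) j1 j2 j3 j4 (x : (rat * rat) * C) p :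
  vecL [:: x] p = vecL (step j1 j2 j3 j4 x) p + relv j1 j2 j3 j4 (rstep j1 j2 j3 j4 x) p.
Proof.
rewrite /vecL /relv /step /rstep; case: ifP => hn; last by rewrite big_nil addr0.
have := fc_neq0 C hn; case: x hn => [[S T] l] /= hn hc.
rewrite !big_cons !big_nil /fundcoef /= !addr0 ![_ == p]eq_sym.
case: (p == (S - 1, T)); case: (p == (S, T - 1)); case: (p == (S, T));
  rewrite /= ?mulr0n ?mulr1n; field; exact: hc.
Qed.

Lemma step_fn (C : numClosedFieldType) (j1 j2 j3 j4 : rat)
  (hj1 : (j1 *+ 2) \is a Num.nat) (hj2 : (j2 *+ 2) \is a Num.nat)
  (hj3 : (j3 *+ 2) \is a Num.nat) (hj4 : (j4 *+ 2) \is a Num.nat)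
  (hJ : Jtot j1 j2 j3 j4 \is a Num.int) (x : (rat * rat) * C) z :
  fnL j1 j2 j3 j4 [:: x] z = fnL j1 j2 j3 j4 (step j1 j2 j3 j4 x) z.
Proof.
rewrite /fnL /step; case: ifP => hn //.
have := fc_neq0 C hn; case: x hn => [[S T] l] /= hn hc.
have hv : validST j1 j2 j3 j4 S T by case/and3P: hn => /admD[].
have H := fund_rel hj1 hj2 hj3 hj4 hJ hv z.
rewrite !big_cons !big_nil /= !addr0.
set s := state _ _ _ _ S T z in H *.
set s1 := state _ _ _ _ (S - 1) T z in H *.
set s2 := state _ _ _ _ S (T - 1) z in H *.
have Es : s = ((ratr (fb j1 j2 j3 j4 S T)) * s2 - (ratr (fa j1 j2 j3 j4 S T)) * s1) / ratr (fc j1 j2 j3 j4 S T).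
  apply: (mulfI hc); rewrite [RHS]mulrC divfK //.
  apply/eqP; rewrite -subr_eq0; apply/eqP; rewrite -H; ring.
rewrite Es; field; exact: hc.
Qed.

Lemma vecL_cat (C : fieldType) (L1 L2 : seq ((rat * rat) * C)) p :
  vecL (L1 ++ L2) p = vecL L1 p + vecL L2 p.
Proof. by rewrite /vecL big_cat. Qed.
Lemma vecL_cons (C : fieldType) (x : (rat * rat) * C) L p :
  vecL (x :: L) p = vecL [:: x] p + vecL L p.
Proof. by rewrite -cat1s vecL_cat. Qed.
Lemma relv_cat (C : fieldType) j1 j2 j3 j4 (L1 L2 : seq ((rat * rat) * C)) p :
  relv j1 j2 j3 j4 (L1 ++ L2) p = relv j1 j2 j3 j4 L1 p + relv j1 j2 j3 j4 L2 p.
Proof. by rewrite /relv big_cat. Qed.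
Lemma fnL_cat (C : fieldType) j1 j2 j3 j4 (L1 L2 : seq ((rat * rat) * C)) z :
  fnL j1 j2 j3 j4 (L1 ++ L2) z = fnL j1 j2 j3 j4 L1 z + fnL j1 j2 j3 j4 L2 z.
Proof. by rewrite /fnL big_cat. Qed.
Lemma fnL_cons (C : fieldType) j1 j2 j3 j4 (x : (rat * rat) * C) L z :
  fnL j1 j2 j3 j4 (x :: L) z = fnL j1 j2 j3 j4 [:: x] z + fnL j1 j2 j3 j4 L z.
Proof. by rewrite -cat1s fnL_cat. Qed.

Lemma stepL_vec (C : numClosedFieldType) j1 j2 j3 j4 (L : seq ((rat * rat) * C)) p :
  vecL L p = vecL (stepL j1 j2 j3 j4 L) p + relv j1 j2 j3 j4 (rstepL j1 j2 j3 j4 L) p.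
Proof.
elim: L => [|x L IH]; first by rewrite /vecL /relv /stepL /rstepL /= !big_nil addr0.
rewrite vecL_cons IH (step_vec j1 j2 j3 j4 x p) /stepL /rstepL /= vecL_cat relv_cat.
by rewrite addrACA.
Qed.

Lemma stepL_fn (C : numClosedFieldType) (j1 j2 j3 j4 : rat)
  (hj1 : (j1 *+ 2) \is a Num.nat) (hj2 : (j2 *+ 2) \is a Num.nat)
  (hj3 : (j3 *+ 2) \is a Num.nat) (hj4 : (j4 *+ 2) \is a Num.nat)
  (hJ : Jtot j1 j2 j3 j4 \is a Num.int) (L : seq ((rat * rat) * C)) z :
  fnL j1 j2 j3 j4 L z = fnL j1 j2 j3 j4 (stepL j1 j2 j3 j4 L) z.
Proof.
elim: L => [|x L IH] //.
by rewrite fnL_cons IH (step_fn hj1 hj2 hj3 hj4 hJ x z) /stepL /= fnL_cat.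
Qed.

Lemma rstepL_valid (C : fieldType) j1 j2 j3 j4 (L : seq ((rat * rat) * C)) :
  all (fun q => validST j1 j2 j3 j4 q.1.1 q.1.2) (rstepL j1 j2 j3 j4 L).
Proof.
elim: L => [|x L IH] //=; rewrite all_cat IH andbT /rstep.
by case: ifP => //= /and3P[/admD[-> _]].
Qed.

Lemma iter_inv (C : numClosedFieldType) (j1 j2 j3 j4 : rat)
  (hj1 : (j1 *+ 2) \is a Num.nat) (hj2 : (j2 *+ 2) \is a Num.nat)
  (hj3 : (j3 *+ 2) \is a Num.nat) (hj4 : (j4 *+ 2) \is a Num.nat)
  (hJ : Jtot j1 j2 j3 j4 \is a Num.int) n (L : seq ((rat * rat) * C)) :
  exists R : seq ((rat * rat) * C),
    [/\ all (fun q => validST j1 j2 j3 j4 q.1.1 q.1.2) R,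
      forall p, vecL L p = vecL (iter n (stepL j1 j2 j3 j4) L) p + relv j1 j2 j3 j4 R p &
      forall z, fnL j1 j2 j3 j4 L z = fnL j1 j2 j3 j4 (iter n (stepL j1 j2 j3 j4) L) z].
Proof.
elim: n => [|n [R [hR hv hf]]].
  by exists [::]; split => // p; rewrite /relv big_nil addr0.
exists (R ++ rstepL j1 j2 j3 j4 (iter n (stepL j1 j2 j3 j4) L)); split.
- by rewrite all_cat hR rstepL_valid.
- by move=> p; rewrite hv /= (stepL_vec j1 j2 j3 j4 (iter n _ L) p) relv_cat; ring.
- by move=> z; rewrite hf /= (stepL_fn hj1 hj2 hj3 hj4 hJ).
Qed.

Lemma step_mem (C : fieldType) j1 j2 j3 j4 (x y : (rat * rat) * C) :
  y \in step j1 j2 j3 j4 x -> nonnormal j1 j2 j3 j4 y.1 ->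
  nonnormal j1 j2 j3 j4 x.1 /\ k14 j1 j2 j3 j4 y.1.1 y.1.2 = k14 j1 j2 j3 j4 x.1.1 x.1.2 - 1.
Proof.
rewrite /step; case: ifP => hn.
  by rewrite !inE => /orP[/eqP->|/eqP->] _ /=; rewrite ?k14_S ?k14_T.
by rewrite inE => /eqP->; rewrite hn.
Qed.

Lemma iter_normal (C : fieldType) j1 j2 j3 j4 n (L : seq ((rat * rat) * C)) :
  (forall x, x \in L -> nonnormal j1 j2 j3 j4 x.1 -> k14 j1 j2 j3 j4 x.1.1 x.1.2 < n%:R) ->
  forall y, y \in iter n (stepL j1 j2 j3 j4) L -> ~~ nonnormal j1 j2 j3 j4 y.1.
Proof.
elim: n L => [|n IH] L H y.
  move=> /= Hy; apply/negP => hn; move: (H y Hy hn); case/and3P: hn => _ h1 _ h2; lra.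
rewrite iterSr; apply: IH => x /flattenP[s /mapP[x0 hx0 ->] hxs] hn.
have [hn0 ->] := step_mem hxs hn.
have := H x0 hx0 hn0; rewrite -natr1; lra.
Qed.

Lemma init_bound (C : fieldType) j1 j2 j3 j4 (hj1 : (j1 *+ 2) \is a Num.nat) (x : (rat * rat) * C) :
  nonnormal j1 j2 j3 j4 x.1 -> k14 j1 j2 j3 j4 x.1.1 x.1.2 < (Num.truncn (j1 *+ 2)).+1%:R.
Proof.
case/and3P=> /admD[_ [h12 [_ [h13 _]]]] _ _.
have E : k12 j1 j2 j3 j4 x.1.1 x.1.2 + k13 j1 j2 j3 j4 x.1.1 x.1.2 + k14 j1 j2 j3 j4 x.1.1 x.1.2 = j1 *+ 2.
  by rewrite /k12 /k13 /k14 /Uof /Jtot mulr2n; ring.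
rewrite -natr1 truncnK //; lra.
Qed.

Definition zt (C : fieldType) (t : C) : 'I_4 -> C * C := fun i =>
  match nat_of_ord i with 0%N => (1, 0) | 1%N => (1, t) | 2%N => (0, 1) | _ => (-1, 1 - t) end.

Definition tr (f : rat -> rat -> rat -> rat -> rat -> rat -> rat) j1 j2 j3 j4 (p : rat * rat) : nat :=
  Num.truncn (f j1 j2 j3 j4 p.1 p.2).

Definition wgt (C : fieldType) j1 j2 j3 j4 (p : rat * rat) : C :=
  (((tr k12 j1 j2 j3 j4 p)`! * (tr k13 j1 j2 j3 j4 p)`! * (tr k14 j1 j2 j3 j4 p)`! *
    (tr k23 j1 j2 j3 j4 p)`! * (tr k24 j1 j2 j3 j4 p)`! * (tr k34 j1 j2 j3 j4 p)`!)%:R)^-1.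

Lemma zt0 (C : fieldType) (t : C) : zt t (inord 0) = (1, 0). Proof. by rewrite /zt inordK. Qed.
Lemma zt1 (C : fieldType) (t : C) : zt t (inord 1) = (1, t). Proof. by rewrite /zt inordK. Qed.
Lemma zt2 (C : fieldType) (t : C) : zt t (inord 2) = (0, 1). Proof. by rewrite /zt inordK. Qed.
Lemma zt3 (C : fieldType) (t : C) : zt t (inord 3) = (-1, 1 - t). Proof. by rewrite /zt inordK. Qed.
Lemma state_zt (C : numClosedFieldType) j1 j2 j3 j4 (p : rat * rat) (t : C) :
  state j1 j2 j3 j4 p.1 p.2 (zt t) = (admissible j1 j2 j3 j4 p.1 p.2)%:R *
     (t ^+ tr k12 j1 j2 j3 j4 p * (1 - t) ^+ tr k14 j1 j2 j3 j4 p * wgt C j1 j2 j3 j4 p).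
Proof.
rewrite /state; case: ifP => _; last by rewrite mul0r.
rewrite mul1r /bfactor zt0 zt1 zt2 zt3 /bracket /=.
have -> : (1 * t - 0 * 1 : C) = t by ring.
have -> : (1 * 1 - 0 * 0 : C) = 1 by ring.
have -> : (1 * (1 - t) - 0 * -1 : C) = 1 - t by ring.
have -> : (1 * 1 - t * 0 : C) = 1 by ring.
have -> : (1 * (1 - t) - t * -1 : C) = 1 by ring.
have -> : (0 * (1 - t) - 1 * -1 : C) = 1 by ring.
rewrite /wgt /tr.
move: (Num.truncn (k12 j1 j2 j3 j4 p.1 p.2)) (Num.truncn (k13 j1 j2 j3 j4 p.1 p.2))
  (Num.truncn (k14 j1 j2 j3 j4 p.1 p.2)) (Num.truncn (k23 j1 j2 j3 j4 p.1 p.2))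
  (Num.truncn (k24 j1 j2 j3 j4 p.1 p.2)) (Num.truncn (k34 j1 j2 j3 j4 p.1 p.2)) => a c e f d b.
rewrite !expr1n !natrM.
have h1 := factC_neq0 C a; have h2 := factC_neq0 C c; have h3 := factC_neq0 C e.
have h4 := factC_neq0 C f; have h5 := factC_neq0 C d; have h6 := factC_neq0 C b.
field. by rewrite h1 h2 h3 h4 h5 h6.
Qed.

Lemma norm01 (j1 j2 j3 j4 : rat)
  (hj1 : (j1 *+ 2) \is a Num.nat) (hj2 : (j2 *+ 2) \is a Num.nat)
  (hj3 : (j3 *+ 2) \is a Num.nat) (hj4 : (j4 *+ 2) \is a Num.nat)
  (hJ : Jtot j1 j2 j3 j4 \is a Num.int) (p : rat * rat) :
  admissible j1 j2 j3 j4 p.1 p.2 -> ~~ nonnormal j1 j2 j3 j4 p ->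
  k14 j1 j2 j3 j4 p.1 p.2 = 0 \/ k23 j1 j2 j3 j4 p.1 p.2 = 0.
Proof.
move=> ha; have [hv [_ [_ [_ [_ [g14 g23]]]]]] := admD ha.
have [_ _ _ _ /andP[i14 i23]] := k_int hj1 hj2 hj3 hj4 hJ hv.
rewrite /nonnormal ha /= negb_and => /orP[] hn.
  left; case: (eqVneq (k14 j1 j2 j3 j4 p.1 p.2) 0) => // N.
  by move: hn; rewrite int_gap // lt_def N g14.
right; case: (eqVneq (k23 j1 j2 j3 j4 p.1 p.2) 0) => // N.
by move: hn; rewrite int_gap // lt_def N g23.
Qed.

Lemma normal_k14 (j1 j2 j3 j4 : rat)
  (hj1 : (j1 *+ 2) \is a Num.nat) (hj2 : (j2 *+ 2) \is a Num.nat)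
  (hj3 : (j3 *+ 2) \is a Num.nat) (hj4 : (j4 *+ 2) \is a Num.nat)
  (hJ : Jtot j1 j2 j3 j4 \is a Num.int) (x p : rat * rat) :
  admissible j1 j2 j3 j4 x.1 x.2 -> ~~ nonnormal j1 j2 j3 j4 x ->
  admissible j1 j2 j3 j4 p.1 p.2 -> ~~ nonnormal j1 j2 j3 j4 p ->
  k14 j1 j2 j3 j4 x.1 x.2 = k14 j1 j2 j3 j4 p.1 p.2.
Proof.
move=> hax hnx hap hnp.
have D : forall q : rat * rat, k14 j1 j2 j3 j4 q.1 q.2 - k23 j1 j2 j3 j4 q.1 q.2 = j1 + j4 - j2 - j3.
  by move=> q; rewrite /k14 /k23; ring.
have := D x; have := D p.
have [_ [_ [_ [_ [_ [g14 g23]]]]]] := admD hax.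
have [_ [_ [_ [_ [_ [f14 f23]]]]]] := admD hap.
case: (norm01 hj1 hj2 hj3 hj4 hJ hax hnx) => ->;
case: (norm01 hj1 hj2 hj3 hj4 hJ hap hnp) => ->; lra.
Qed.

Lemma same_a (j1 j2 j3 j4 : rat)
  (hj1 : (j1 *+ 2) \is a Num.nat) (hj2 : (j2 *+ 2) \is a Num.nat)
  (hj3 : (j3 *+ 2) \is a Num.nat) (hj4 : (j4 *+ 2) \is a Num.nat)
  (hJ : Jtot j1 j2 j3 j4 \is a Num.int) (x p : rat * rat) :
  admissible j1 j2 j3 j4 x.1 x.2 -> ~~ nonnormal j1 j2 j3 j4 x ->
  admissible j1 j2 j3 j4 p.1 p.2 -> ~~ nonnormal j1 j2 j3 j4 p ->
  tr k12 j1 j2 j3 j4 x = tr k12 j1 j2 j3 j4 p -> x = p.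
Proof.
move=> hax hnx hap hnp.
have E14 := normal_k14 hj1 hj2 hj3 hj4 hJ hax hnx hap hnp.
have [vx [gx _]] := admD hax; have [vp [gp _]] := admD hap.
have [ix _ _ _ _] := k_int hj1 hj2 hj3 hj4 hJ vx.
have [ip _ _ _ _] := k_int hj1 hj2 hj3 hj4 hJ vp.
rewrite /tr => Et.
have E12 : k12 j1 j2 j3 j4 x.1 x.2 = k12 j1 j2 j3 j4 p.1 p.2 by rewrite (int_nat ix gx) (int_nat ip gp) Et.
move: E12 E14; case: x {hax hnx vx gx ix Et} => Sx Tx; case: p {hap hnp vp gp ip} => Sp Tp /=.
rewrite /k12 /k14 /Uof /Jtot => E1 E2.
have ES : Sx = Sp by lra.
have ET : Tx = Tp by lra.
by rewrite ES ET.
Qed.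

Lemma wgt_neq0 (C : numClosedFieldType) j1 j2 j3 j4 p : wgt C j1 j2 j3 j4 p != 0.
Proof. by rewrite /wgt invr_eq0 pnatr_eq0 -lt0n !muln_gt0 !fact_gt0. Qed.

Lemma indep (C : numClosedFieldType) (j1 j2 j3 j4 : rat)
  (hj1 : (j1 *+ 2) \is a Num.nat) (hj2 : (j2 *+ 2) \is a Num.nat)
  (hj3 : (j3 *+ 2) \is a Num.nat) (hj4 : (j4 *+ 2) \is a Num.nat)
  (hJ : Jtot j1 j2 j3 j4 \is a Num.int) (N : seq ((rat * rat) * C)) :
  (forall y, y \in N -> ~~ nonnormal j1 j2 j3 j4 y.1) ->
  (forall z, fnL j1 j2 j3 j4 N z = 0) ->
  forall p, admissible j1 j2 j3 j4 p.1 p.2 -> vecL N p = 0.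
Proof.
move=> hN hf p hp.
case: (boolP (nonnormal j1 j2 j3 j4 p)) => hnp.
  rewrite /vecL big1_seq // => x /andP[_ hx]; case: eqP => [E|]; last by rewrite mulr0n.
  by move: (hN x hx); rewrite E hnp.
pose P := \sum_(x <- N) (x.2 * (admissible j1 j2 j3 j4 x.1.1 x.1.2)%:R * wgt C j1 j2 j3 j4 x.1)
            *: 'X^(tr k12 j1 j2 j3 j4 x.1).
have hE : forall t : C, t != 1 -> P.[t] = 0.
  move=> t ht.
  have : fnL j1 j2 j3 j4 N (zt t) = (1 - t) ^+ tr k14 j1 j2 j3 j4 p * P.[t].
    rewrite /fnL /P horner_sum mulr_sumr; apply: eq_big_seq => x hx.
    rewrite state_zt hornerZ hornerXn.
    case: (boolP (admissible j1 j2 j3 j4 x.1.1 x.1.2)) => hax /=; last by rewrite !mulr0 !mul0r !mulr0.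
    have Ek : tr k14 j1 j2 j3 j4 x.1 = tr k14 j1 j2 j3 j4 p.
      by rewrite /tr (normal_k14 hj1 hj2 hj3 hj4 hJ hax (hN x hx) hp hnp).
    rewrite Ek; move: (tr k14 j1 j2 j3 j4 p) (tr k12 j1 j2 j3 j4 x.1) (wgt C j1 j2 j3 j4 x.1) => n m w.
    ring.
  rewrite hf => /esym /eqP; rewrite mulf_eq0 expf_eq0 subr_eq0 eq_sym (negbTE ht) andbF /=.
  by move/eqP.
have P0 : P = 0.
  apply: (@roots_geq_poly_eq0 _ _ [seq i.+2%:R | i <- iota 0 (size P)]).
  - apply/allP => r /mapP[i _ ->]; rewrite /root hE //.
    by rewrite pnatr_eq1.
  - rewrite map_inj_uniq ?iota_uniq // => i j /eqP; rewrite eqr_nat => /eqP [].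
    done.
  - by rewrite size_map size_iota.
have := congr1 (fun q : {poly C} => q`_(tr k12 j1 j2 j3 j4 p)) P0; rewrite coef0 /P coef_sum.
have -> : \sum_(x <- N) ((x.2 * (admissible j1 j2 j3 j4 x.1.1 x.1.2)%:R * wgt C j1 j2 j3 j4 x.1)
            *: 'X^(tr k12 j1 j2 j3 j4 x.1))`_(tr k12 j1 j2 j3 j4 p) = wgt C j1 j2 j3 j4 p * vecL N p.
  rewrite /vecL mulr_sumr; apply: eq_big_seq => x hx; rewrite coefZ coefXn.
  case: (eqVneq x.1 p) => [E|N1].
    by rewrite E hp eqxx /= mulr1n !mulr1 mulrC.
  rewrite mulr0n mulr0.
  case: (boolP (admissible j1 j2 j3 j4 x.1.1 x.1.2)) => hax /=; last by rewrite mulr0 !mul0r.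
  case: eqP => [E|]; last by rewrite mulr0.
  by move: N1; rewrite (same_a hj1 hj2 hj3 hj4 hJ hax (hN x hx) hp hnp) ?eqxx.
by move/eqP; rewrite mulf_eq0 (negbTE (wgt_neq0 _ _ _ _ _ _)) => /eqP.
Qed.

Lemma sum_pred1_uniq (C : fieldType) (Q : seq (rat * rat)) a (G : C) :
  uniq Q -> a \in Q -> \sum_(q <- Q | a == q) G = G.
Proof.
move=> uQ aQ; rewrite (big_rem a) //= eqxx big1_seq ?addr0 // => q /andP[/eqP <- H].
by rewrite mem_rem_uniqF in H.
Qed.

Lemma conv (C : fieldType) j1 j2 j3 j4 (R : seq ((rat * rat) * C)) :
  all (fun q => validST j1 j2 j3 j4 q.1.1 q.1.2) R ->
  exists (Q : seq (rat * rat)) (lam : rat * rat -> C),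
    all (fun q => validST j1 j2 j3 j4 q.1 q.2) Q /\
    forall p, relv j1 j2 j3 j4 R p = \sum_(q <- Q) lam q * fundcoef C j1 j2 j3 j4 q p.
Proof.
move=> hR; exists (undup (map fst R)), (fun q => \sum_(y <- R | y.1 == q) y.2); split.
  apply/allP => q; rewrite mem_undup => /mapP[y hy ->]; exact: (allP hR y hy).
move=> p; rewrite /relv.
under [RHS]eq_bigr do rewrite mulr_suml.
transitivity (\sum_(i <- undup [seq i.1 | i <- R]) \sum_(y <- R) (if y.1 == i then y.2 * fundcoef C j1 j2 j3 j4 y.1 p else 0)); last first.
  apply: eq_bigr => q _; rewrite [RHS]big_mkcond /=; apply: eq_bigr => y _.
  by case: eqP => // ->.
rewrite exchange_big /=; apply: eq_big_seq => y hy.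
rewrite -big_mkcond /=.
rewrite sum_pred1_uniq ?undup_uniq // mem_undup; exact: map_f.
Qed.

Unset Implicit Arguments.

Theorem mainTheorem7 (C : numClosedFieldType) (j1 j2 j3 j4 : rat)
  (hj1 : (j1 *+ 2) \is a Num.nat) (hj2 : (j2 *+ 2) \is a Num.nat)
  (hj3 : (j3 *+ 2) \is a Num.nat) (hj4 : (j4 *+ 2) \is a Num.nat)
  (hJ : Jtot j1 j2 j3 j4 \is a Num.int) :
  (* the fundamental relation holds for every (S,T) *)
  (forall S T : rat, validST j1 j2 j3 j4 S T ->
     forall z : 'I_4 -> C * C,
       (ratr (fa j1 j2 j3 j4 S T) : C) * state j1 j2 j3 j4 (S - 1) T z
       - (ratr (fb j1 j2 j3 j4 S T) : C) * state j1 j2 j3 j4 S (T - 1) z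
       + (ratr (fc j1 j2 j3 j4 S T) : C) * state j1 j2 j3 j4 S T z = 0)
  /\
  (* every linear relation among the states is a linear combination of
     fundamental relations *)
  (forall (P : seq (rat * rat)) (c : rat * rat -> C),
     (forall z : 'I_4 -> C * C,
        \sum_(p <- P) c p * state j1 j2 j3 j4 p.1 p.2 z = 0) ->
     exists (Q : seq (rat * rat)) (lam : rat * rat -> C),
       all (fun q => validST j1 j2 j3 j4 q.1 q.2) Q /\
       forall p : rat * rat, admissible j1 j2 j3 j4 p.1 p.2 ->
         \sum_(p' <- P | p' == p) c p' =
         \sum_(q <- Q) lam q * fundcoef C j1 j2 j3 j4 q p).
Proof.
split.
  by move=> S T hv z; apply: fund_rel.
move=> P c H.
pose L0 := [seq (p, c p) | p <- P].
have [R [hR hv hf]] := iter_inv hj1 hj2 hj3 hj4 hJ (Num.truncn (j1 *+ 2)).+1 L0.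
have hN : forall y, y \in iter (Num.truncn (j1 *+ 2)).+1 (stepL j1 j2 j3 j4) L0 ->
    ~~ nonnormal j1 j2 j3 j4 y.1.
  by apply: iter_normal => x _; exact: init_bound.
have hfN : forall z, fnL j1 j2 j3 j4 (iter (Num.truncn (j1 *+ 2)).+1 (stepL j1 j2 j3 j4) L0) z = 0.
  by move=> z; rewrite -hf /fnL /L0 big_map; exact: H.
have [Q [lam [hQ hQe]]] := conv hR.
exists Q, lam; split => // p hp.
have := hv p; rewrite (indep hj1 hj2 hj3 hj4 hJ hN hfN hp) add0r hQe => <-.
rewrite /vecL /L0 big_map [LHS]big_mkcond /=; apply: eq_bigr => p' _.
by rewrite mulrb.
Qed.
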